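(* In the Min Sum Set Cover case (all box values in $\{0,\infty\}$), there is a scenario-independent rounding which, given any doubly stochastic $\overline{x}\in[0,1]^{n\times n}$, produces a random order of opening the boxes such that for every scenario $s$ the expected number of boxes opened until a box of value $0$ in $s$ is opened is at most $4\,\overline{g}^s(\overline{x})$; i.e. it is a $4$-approximation.
   Context: There are $n$ boxes $\mathcal{B}=\{1,\dots,n\}$ and time steps $\mathcal{T}=\{1,\dots,n\}$. A scenario $s$ is a vector $c^s\in\{0,\infty\}^n$ with at least one zero entry. For doubly stochastic $x$, $\overline{g}^s(x)=\min_{z\ge0}\sum_{i\in\mathcal{B},t\in\mathcal{T}}(t+c^s_i)z_{it}$ subject to $\sum_{i,t}z_{it}=1$ and $z_{it}\le x_{it}$ for all $i,t$ (with $z_{it}=0$ forced wherever $c^s_i=\infty$ in a finite solution). *)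

(* Defs.v *)
From HB Require Import structures.
From mathcomp Require Import all_boot all_order all_algebra all_fingroup.
From mathcomp Require Import boolp classical_sets reals.
Set Implicit Arguments. Unset Strict Implicit. Unset Printing Implicit Defensive.
Import Order.TTheory GRing.Theory Num.Theory.
Local Open Scope ring_scope.
Local Open Scope classical_set_scope.

(* Boxes and time steps are both indexed by 'I_n; time step t : 'I_n stands
   for the time val t + 1 in {1,...,n}. *)

Section MSSC.
Variable R : realType.
Variable n : nat.

Definition doubly_stochastic (x : 'M[R]_n) : Prop :=
  (forall i t, 0 <= x i t) /\
  (forall i, \sum_(t < n) x i t = 1) /\
  (forall t, \sum_(i < n) x i t = 1).

(* A Min-Sum-Set-Cover scenario c^s in {0,oo}^n is encoded by the set S of
   boxes i with c^s_i = 0 (S must be nonempty). *)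
Definition lp_feasible (x : 'M[R]_n) (S : {set 'I_n}) (z : 'M[R]_n) : Prop :=
  (forall i t, 0 <= z i t) /\
  (\sum_(i < n) \sum_(t < n) z i t = 1) /\
  (forall i t, z i t <= x i t) /\
  (forall i t, i \notin S -> z i t = 0).

(* Objective sum_{i,t} (t + c_i) z_{it} restricted to finite-cost support,
   where c_i = 0 on the support. *)
Definition lp_obj (z : 'M[R]_n) : R :=
  \sum_(i < n) \sum_(t < n) (t.+1)%:R * z i t.

Definition gbar (x : 'M[R]_n) (S : {set 'I_n}) : R :=
  inf [set lp_obj z | z in [set z | lp_feasible x S z]].

(* A random order of opening the boxes: a probability distribution over
   permutations; sigma t is the box opened at time step t. *)
Definition is_distr (p : {ffun {perm 'I_n} -> R}) : Prop :=
  (forall s, 0 <= p s) /\ \sum_(s : {perm 'I_n}) p s = 1.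

Definition open_cost (sigma : {perm 'I_n}) (S : {set 'I_n}) : nat :=
  \big[minn/n.+1]_(t < n | sigma t \in S) t.+1.

Definition expected_cost (p : {ffun {perm 'I_n} -> R}) (S : {set 'I_n}) : R :=
  \sum_(s : {perm 'I_n}) p s * (open_cost s S)%:R.

End MSSC.

(* Main.v *)
Require Import Defs.
From HB Require Import structures.
From mathcomp Require Import all_boot all_order all_algebra all_fingroup.
From mathcomp Require Import boolp reals.
From mathcomp Require Import zify ring lra.
Import Order.TTheory GRing.Theory Num.Theory.
Local Open Scope ring_scope.

Set Implicit Arguments. Unset Strict Implicit. Unset Printing Implicit Defensive.

Section Round.
Variable R : realType.
Variable n : nat.
Variable x : 'M[R]_n.

Definition Xc (i : 'I_n) (q : nat) : R := \sum_(t < n | (t < q)%N) x i t.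
Definition qof (o : seq 'I_n) := (size o)./2.
Definition Zs (o : seq 'I_n) : R := \sum_(i < n | i \notin o) Xc i (qof o).
Definition cnt (o : seq 'I_n) : nat := #|[pred i : 'I_n | i \notin o]|.
Definition w (o : seq 'I_n) (i : 'I_n) : R :=
  if i \in o then 0 else if 0 < Zs o then Xc i (qof o) / Zs o else (cnt o)%:R^-1.

Definition perm_of (o : seq 'I_n) : {perm 'I_n} :=
  odflt 1%g [pick s : {perm 'I_n} | [forall t, s t == nth t o t]].

Fixpoint D (r : nat) (o : seq 'I_n) : {ffun {perm 'I_n} -> R} :=
  if r is r'.+1 then [ffun s => \sum_(i < n) w o i * D r' (rcons o i) s]
  else [ffun s => (s == perm_of o)%:R].

Hypothesis ds : doubly_stochastic x.

Lemma x_ge0 i t : 0 <= x i t. Proof. by case: ds => H _; apply: H. Qed.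

Lemma Xc_ge0 i q : 0 <= Xc i q.
Proof. by apply: sumr_ge0 => t _; apply: x_ge0. Qed.

Lemma Zs_ge0 o : 0 <= Zs o.
Proof. by apply: sumr_ge0 => i _; apply: Xc_ge0. Qed.

Lemma w_ge0 o i : 0 <= w o i.
Proof.
rewrite /w; case: (i \in o) => //; case: ifP => [Zp|_].
  by apply: divr_ge0; [apply: Xc_ge0 | apply: ltW].
by rewrite invr_ge0 ler0n.
Qed.

Lemma cnt_gt0 o : (size o < n)%N -> (0 < cnt o)%N.
Proof.
move=> so; rewrite /cnt.
have H := cardC (mem o); rewrite card_ord in H.
have B := card_size o.
have -> : #|[pred i : 'I_n | i \notin o]| = #|[predC mem o]|.
  by apply: eq_card => i; rewrite !inE.
move: H B; set a := #|_|; set b := #|_|; move=> H B; have := leq_ltn_trans B so; lia.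
Qed.

Lemma w_sum o : (size o < n)%N -> \sum_i w o i = 1.
Proof.
move=> so; rewrite /w.
rewrite (bigID (fun i => i \in o)) /= big1 ?add0r; last by move=> i ->.
under eq_bigr => i /= Hi do rewrite (negbTE Hi).
case: (boolP (0 < Zs o)) => Zp.
  rewrite -mulr_suml; apply: divff; exact: lt0r_neq0.

rewrite sumr_const.
have -> : #|[pred i : 'I_n | true && (i \notin o)]| = cnt o.
  by apply: eq_card => i; rewrite !inE.
rewrite -[_ *+ _]mulr_natr mulVf // pnatr_eq0 -lt0n; exact: cnt_gt0.
Qed.

Lemma D_ge0 r o s : 0 <= D r o s.
Proof.
elim: r o => [|r IH] o /=; rewrite ffunE; first by rewrite ler0n.
by apply: sumr_ge0 => i _; apply: mulr_ge0; [apply: w_ge0 | apply: IH].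
Qed.

Lemma D_sum r o : (size o + r = n)%N -> \sum_s D r o s = 1.
Proof.
elim: r o => [|r IH] o /= so.
  under eq_bigr => s _ do rewrite ffunE.
  rewrite (bigD1 (perm_of o)) //= eqxx big1 ?addr0 // => s /negbTE -> //.
under eq_bigr => s _ do rewrite ffunE.
rewrite exchange_big /=.
under eq_bigr => i _ do rewrite -mulr_sumr IH ?mulr1 ?size_rcons ?addSnnS //.
apply: w_sum; lia.
Qed.


Lemma perm_ofE o : uniq o -> size o = n -> forall t, perm_of o t = nth t o t.
Proof.
move=> uo so.
have inj : injective (fun t : 'I_n => nth t o t).
  move=> t1 t2 /= E; apply: val_inj => /=; apply/eqP.
  have l1 : (t1 < size o)%N by rewrite so ltn_ord.
  have l2 : (t2 < size o)%N by rewrite so ltn_ord.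
  rewrite -(nth_uniq t1 l1 l2 uo) E; rewrite (set_nth_default t1 t2) //.
rewrite /perm_of; case: pickP => [s /forallP H|H] t; first exact/eqP.
exfalso; move: (H (perm inj)) => /negP; apply; apply/forallP => u.
by rewrite permE.
Qed.

Lemma bigmin_le_seq (s : seq 'I_n) (P : pred 'I_n) (F : 'I_n -> nat) m t0 :
  t0 \in s -> P t0 -> (\big[minn/m]_(t <- s | P t) F t <= F t0)%N.
Proof.
elim: s => // a s IH; rewrite inE big_cons => /orP [/eqP <- ->|ins Pt].
  exact: geq_minl.
case: ifP => _; last exact: IH.
by rewrite geq_min IH ?orbT.
Qed.

Lemma open_cost_le (s : {perm 'I_n}) S : (open_cost s S <= n.+1)%N.
Proof. rewrite /open_cost; apply: (big_ind (fun v => v <= n.+1)%N) => // [a b Ha Hb|t _]; [by rewrite geq_min Ha | exact: ltnW (ltn_ord t)]. Qed.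

Definition inS (S : {set 'I_n}) : pred 'I_n := fun i => i \in S.

Lemma open_cost_hit o S : uniq o -> size o = n -> has (inS S) o ->
  (open_cost (perm_of o) S <= (find (inS S) o).+1)%N.
Proof.
move=> uo so hs.
have lt : (find (inS S) o < n)%N by move: hs; rewrite has_find so.
pose t0 : 'I_n := Ordinal lt.
have P0 : perm_of o t0 \in S.
  rewrite perm_ofE //=; exact: (nth_find t0 hs).
rewrite /open_cost; apply: (@bigmin_le_seq _ _ (fun t : 'I_n => t.+1) _ t0) => //; exact: mem_index_enum.
Qed.

Lemma EC0 o S : expected_cost (D 0 o) S = (open_cost (perm_of o) S)%:R.
Proof.
rewrite /expected_cost (bigD1 (perm_of o)) //= ffunE eqxx mul1r big1 ?addr0 //.
by move=> s /negbTE; rewrite ffunE => ->; rewrite mul0r.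
Qed.

Lemma ECS r o S : expected_cost (D r.+1 o) S =
  \sum_i w o i * expected_cost (D r (rcons o i)) S.
Proof.
rewrite /expected_cost.
under eq_bigr => s _ do rewrite ffunE mulr_suml.
rewrite exchange_big /=; apply: eq_bigr => i _; rewrite mulr_sumr.
by apply: eq_bigr => s _; rewrite mulrA.
Qed.


Variable S : {set 'I_n}.
Definition Y q := \sum_(i in S) Xc i q.
Definition h q := Num.min 1 (Y q).
Definition Psi k := 2 * \sum_(k <= j < n) (1 - h j./2).
Definition bnd o := if has (inS S) o then ((find (inS S) o).+1)%:R
  else 2 * (size o)%:R + Psi (size o).

Lemma Y_ge0 q : 0 <= Y q.
Proof. by apply: sumr_ge0 => i _; apply: Xc_ge0. Qed.

Lemma h_ge0 q : 0 <= h q.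
Proof. by rewrite /h le_min ler01 Y_ge0. Qed.

Lemma h_le1 q : h q <= 1.
Proof. by rewrite /h ge_min lexx. Qed.

Lemma h_leY q : h q <= Y q.
Proof. by rewrite /h ge_min lexx orbT. Qed.

Lemma Psi_ge0 k : 0 <= Psi k.
Proof.
apply: mulr_ge0 => //; apply: sumr_ge0 => j _; rewrite subr_ge0; exact: h_le1.
Qed.

Lemma PsiS k : (k < n)%N -> Psi k = Psi k.+1 + 2 * (1 - h k./2).
Proof. by move=> lt; rewrite /Psi big_ltn //; ring. Qed.

Lemma Zs_le_q o : (qof o <= n)%N -> Zs o <= (qof o)%:R.
Proof.
move=> qn.
have -> : (qof o)%:R = \sum_(i < n) Xc i (qof o) :> R.
  rewrite /Xc exchange_big /=.
  have -> : (qof o)%:R = \sum_(t < qof o) (1 : R).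
    by rewrite sumr_const card_ord.
  rewrite (big_ord_widen _ (fun _ => (1 : R)) qn).
  apply: eq_bigr => t _.
  by case: ds => _ [_ H]; rewrite H.
rewrite /Zs [X in _ <= X](bigID (fun i => i \notin o)) /= lerDl.
by apply: sumr_ge0 => i _; apply: Xc_ge0.
Qed.

Lemma Y_le_Zs o : ~~ has (inS S) o -> Y (qof o) <= Zs o.
Proof.
move=> nh; rewrite /Y /Zs big_mkcond [X in _ <= X]big_mkcond /=.
apply: ler_sum => i _; case: ifP => iS.
  have -> : i \notin o.
    apply/negP => io; move/negP: nh; apply; apply/hasP; by exists i.
  exact: lexx.
by case: ifP => _ //; apply: Xc_ge0.
Qed.

Lemma PS_ge o : ~~ has (inS S) o -> (size o < n)%N ->
  h (qof o) / (qof o)%:R <= \sum_(i in S) w o i.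
Proof.
move=> nh so.
have qn : (qof o <= n)%N by rewrite /qof -divn2; lia.
have nio i : i \in S -> i \notin o.
  move=> iS; apply/negP => io; move/negP: nh; apply; apply/hasP; by exists i.
have PS0 : 0 <= \sum_(i in S) w o i by apply: sumr_ge0 => i _; apply: w_ge0.
case: (boolP (0 < Zs o)) => Zp; last first.
  have Z0 : Zs o <= 0 by rewrite leNgt.
  have : h (qof o) <= 0.
    apply: (le_trans (h_leY _)); apply: (le_trans (Y_le_Zs nh)); exact: Z0.
  move=> hle; apply: le_trans PS0; apply: mulr_le0_ge0 => //.
  by rewrite invr_ge0 ler0n.
have -> : \sum_(i in S) w o i = Y (qof o) / Zs o.
  rewrite /Y mulr_suml; apply: eq_bigr => i iS.
  by rewrite /w (negbTE (nio i iS)) Zp.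
case: (posnP (qof o)) => [->|qp]; first by rewrite invr0 mulr0 divr_ge0 ?Y_ge0 ?ltW.
have qR : 0 < (qof o)%:R :> R by rewrite ltr0n.
apply: (le_trans (y := Y (qof o) / (qof o)%:R)).
  by apply: ler_wpM2r; [rewrite invr_ge0 ltW | exact: h_leY].
apply: ler_wpM2l; first exact: Y_ge0.
rewrite lef_pV2 ?posrE //; exact: Zs_le_q.
Qed.


Lemma h0 : h 0 = 0.
Proof.
rewrite /h; have -> : Y 0 = 0 by rewrite /Y big1 // => i _; rewrite /Xc big_pred0.
apply/eqP; rewrite eq_le ge_min lexx orbT le_min ler01 lexx //=.
Qed.

Lemma lam_bound k : (0 <= k)%N -> 2 * h k./2 <= (k.+1)%:R * (h k./2 / (k./2)%:R).
Proof.
move=> _; case: (posnP k./2) => [->|qp].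
  by rewrite h0 mulr0 mul0r mulr0.
have qR : 0 < (k./2)%:R :> R by rewrite ltr0n.
rewrite (mulrC 2) mulrA (mulrC _ (h _)) -mulrA; apply: ler_wpM2l; first exact: h_ge0.
rewrite ler_pdivlMr // -natrM ler_nat -divn2; lia.
Qed.

Lemma main r o : (0 < n)%N -> uniq o -> (size o + r = n)%N ->
  expected_cost (D r o) S <= bnd o.
Proof.
elim: r o => [|r IH] o n0 uo so.
  rewrite EC0 /bnd; rewrite addn0 in so; case: ifP => hs.
    rewrite ler_nat; exact: open_cost_hit.
  apply: (le_trans (y := (n.+1)%:R)); first by rewrite ler_nat; exact: open_cost_le.
  rewrite so; have := Psi_ge0 n.
  have A : (n.+1)%:R <= 2 * n%:R :> R.
    have -> : 2 * n%:R = (2 * n)%N%:R :> R by rewrite natrM.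
    rewrite ler_nat; lia.
  lra.
rewrite ECS.
have sol : (size o < n)%N by lia.
have uoi i : i \notin o -> uniq (rcons o i) by move=> io; rewrite rcons_uniq io uo.
have soi i : (size (rcons o i) + r = n)%N by rewrite size_rcons; lia.
case: (boolP (has (inS S) o)) => hs.
  rewrite /bnd hs.
  apply: (le_trans (y := \sum_i w o i * ((find (inS S) o).+1)%:R)).
    apply: ler_sum => i _; case: (boolP (i \in o)) => io.
      by rewrite /w io !mul0r.
    apply: ler_wpM2l; first exact: w_ge0.
    have := IH (rcons o i) n0 (uoi i io) (soi i).
    by rewrite /bnd -cats1 has_cat hs find_cat hs.
  by rewrite -mulr_suml w_sum // mul1r.
rewrite /bnd (negbTE hs).
set k := size o.
set Ps := Psi k.+1.
set Phi := 2 * (k.+1)%:R + Ps.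
apply: (le_trans (y := \sum_i w o i * (if i \in S then (k.+1)%:R else Phi))).
  apply: ler_sum => i _; case: (boolP (i \in o)) => io.
    by rewrite /w io !mul0r.
  apply: ler_wpM2l; first exact: w_ge0.
  have := IH (rcons o i) n0 (uoi i io) (soi i).
  rewrite /bnd -cats1 has_cat (negbTE hs) find_cat (negbTE hs) /= /inS size_cat /=.
  by case: (i \in S) => /=; rewrite ?addn0 ?addn1.
rewrite (bigID (fun i => i \in S)) /=.
under eq_bigr => i /= iS do rewrite iS.
under [X in _ + X <= _]eq_bigr => i /= iS do rewrite (negbTE iS).
rewrite -!mulr_suml.
have ws := w_sum sol; rewrite (bigID (fun i => i \in S)) /= in ws.
set PS := \sum_(i | i \in S) w o i in ws *.
set PN := \sum_(i | ~~ (i \in S)) w o i in ws *.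
have lamPS := PS_ge hs sol.
rewrite /qof -/k in lamPS.
have lb := lam_bound (leq0n k).
set lam := h k./2 / (k./2)%:R in lamPS lb.
have lam0 : 0 <= lam by apply: divr_ge0; [exact: h_ge0 | exact: ler0n].
have Ps0 : 0 <= Ps by exact: Psi_ge0.
have F1 : lam * ((k.+1)%:R + Ps) <= PS * ((k.+1)%:R + Ps).
  by apply: ler_wpM2r => //; apply: addr_ge0 => //; exact: ler0n.
have F2 : 0 <= lam * Ps by exact: mulr_ge0.
rewrite (PsiS sol) -/Ps.
rewrite /Phi -natr1 in F1 lb *.
have e1 : h (size o)./2 = h k./2 by []. rewrite e1. have lamPS2 : lam <= PS := lamPS. have -> : PN = 1 - PS by rewrite -ws; ring. clear -F1 F2 lamPS2 lb Ps0 lam0. lra.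
Qed.


Lemma lp_lb z : lp_feasible x S z -> \sum_(s < n) (1 - h s) <= lp_obj z.
Proof.
case=> z0 [zs [zx zS]].
pose zeta (t : 'I_n) := \sum_(i < n) z i t.
have obj : lp_obj z = \sum_(t < n) (t.+1)%:R * zeta t.
  rewrite /lp_obj exchange_big /=; apply: eq_bigr => t _; by rewrite mulr_sumr.
have zeta1 : \sum_(t < n) zeta t = 1 by rewrite /zeta exchange_big.
have zeta0 t : 0 <= zeta t by apply: sumr_ge0.
have step s : 1 - h s <= \sum_(t < n | ~~ (t < s)%N) zeta t.
  have sp := zeta1; rewrite (bigID (fun t : 'I_n => (t < s)%N)) /= in sp.
  have A : \sum_(t < n | (t < s)%N) zeta t <= h s.
    rewrite /h le_min; apply/andP; split.
      rewrite -sp lerDl; exact: sumr_ge0.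
    rewrite /Y /Xc [X in _ <= X]exchange_big /=; apply: ler_sum => t _.
    rewrite /zeta [X in _ <= X]big_mkcond /=; apply: ler_sum => i _.
    by case: ifP => iS; [exact: zx | rewrite zS ?iS].
  move: sp A; set a := \sum_(t < n | _) _; set b := \sum_(t < n | _) _ => sp A.
  lra.
rewrite obj; apply: (le_trans (y := \sum_(s < n) \sum_(t < n | ~~ (t < s)%N) zeta t)); first by apply: ler_sum => s _; exact: step.
under eq_bigr => s _ do rewrite big_mkcond.
rewrite exchange_big /=; rewrite le_eqVlt; apply/orP; left; apply/eqP; apply: eq_bigr => t _.
rewrite -big_mkcond /=.
under eq_bigl => s do rewrite -leqNgt -ltnS.
rewrite -(big_ord_widen _ (fun _ => zeta t) (ltn_ord t)) sumr_const card_ord.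
by rewrite mulr_natl.
Qed.

Lemma gbar_lb (i0 : 'I_n) : i0 \in S -> \sum_(s < n) (1 - h s) <= gbar x S.
Proof.
move=> i0S; apply: lb_le_inf.
  pose z0 : 'M[R]_n := \matrix_(i, t) (if i == i0 then x i t else 0).
  exists (lp_obj z0); exists z0 => //.
  split; first by move=> i t; rewrite mxE; case: ifP => _ //; exact: x_ge0.
  split.
    rewrite (bigD1 i0) //= [X in _ + X]big1 ?addr0; last first.
      by move=> i /= ne; apply: big1 => t _; rewrite mxE (negbTE ne).
    under eq_bigr => t _ do rewrite mxE eqxx.
    by case: ds => _ [H _]; rewrite H.
  split; first by move=> i t; rewrite mxE; case: ifP => _ //; exact: x_ge0.
  move=> i t iS; rewrite mxE; case: ifP => // /eqP ei; by rewrite ei i0S in iS.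
by move=> y [z zf <-]; apply: lp_lb.
Qed.

End Round.

Lemma sum_half (R : realType) (f : nat -> R) m :
  \sum_(0 <= j < (m.*2)%N) f j./2 = 2 * \sum_(0 <= s < m) f s.
Proof.
elim: m => [|m IH]; first by rewrite !big_geq // mulr0.
rewrite doubleS !big_nat_recr //= IH.
rewrite doubleK uphalf_double; ring.
Qed.

Unset Implicit Arguments.

Theorem corollaryC3 (R : realType) (n : nat) :
  exists round : 'M[R]_n -> {ffun {perm 'I_n} -> R},
    forall x : 'M[R]_n, doubly_stochastic x ->
      is_distr (round x) /\
      forall S : {set 'I_n}, S != finset.set0 ->
        expected_cost (round x) S <= 4 * gbar x S.
Proof.
exists (fun x => D x n [::]) => x ds; split.
  split; first by move=> s; exact: (D_ge0 ds).
  by apply: D_sum.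
move=> S /set0Pn [i0 i0S].
have n0 : (0 < n)%N by exact: leq_ltn_trans (leq0n _) (ltn_ord i0).
apply: (le_trans (main (o := [::]) ds S n0 (erefl true) (add0n n))).
rewrite /bnd /= mulr0 add0r.
have G := gbar_lb ds i0S.
apply: (le_trans (y := 4 * \sum_(s < n) (1 - h x S s))); last first.
  by apply: ler_wpM2l.
rewrite /Psi.
have F0 j : 0 <= 1 - h x S j by rewrite subr_ge0 h_le1.
apply: (le_trans (y := 2 * \sum_(0 <= j < n.*2) (1 - h x S j./2))).
  apply: ler_wpM2l => //.
  rewrite [X in _ <= X](@big_cat_nat _ _ _ n) //=; last by rewrite -addnn leq_addr.
  by rewrite lerDl; apply: sumr_ge0 => j _.
rewrite (sum_half (fun s => 1 - h x S s)) big_mkord mulrA.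
have -> : (2 * 2 : R) = 4 by rewrite -natrM. by [].
Qed.
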